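(* Every uniformly convex Banach space $X$ has the weak fixed point property for mappings which diminish the radius of invariant convex subsets: for every nontrivial weakly compact convex subset $K$ of $X$, every self-mapping $T:K\to K$ which diminishes the radius of invariant convex subsets of $K$ has a fixed point in $K$.
   Context: Nontrivial means containing more than one point. For $x\in X$ and $A\subseteq X$, $r_x(A)=\sup\{\|x-y\|:y\in A\}$. A mapping $T:K\to K$ diminishes the radius of invariant convex subsets of $K$ if for every convex $A\subseteq K$ with $T(A)\subseteq A$, $r_{Tx}(T(A))\le r_x(A)$ for every $x\in K$. *)

(* Defs.v *)
From HB Require Import structures.
From mathcomp Require Import all_boot all_order all_algebra.
From mathcomp Require Import all_classical all_reals all_analysis.
Set Implicit Arguments. Unset Strict Implicit. Unset Printing Implicit Defensive.
Import Order.TTheory GRing.Theory Num.Theory.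
Import numFieldNormedType.Exports.
Local Open Scope classical_set_scope.
Local Open Scope ring_scope.

Section Defs.
Context {R : realType} {X : normedModType R}.

Definition convex_subset (A : set X) : Prop :=
  forall x y (t : R), A x -> A y -> 0 <= t -> t <= 1 ->
    A (t *: x + (1 - t) *: y).

Definition nontrivial (A : set X) : Prop := exists x y, A x /\ A y /\ x <> y.

Definition dual_space : Type :=
  { f : X -> R | (forall (a : R) (x y : X), f (a *: x + y) = a * f x + f y)
                 /\ continuous f }.

Definition weak_eval (x : X) : prod_topology (fun _ : dual_space => R) :=
  fun f => proj1_sig f x.

(* The weak topology sigma(X, X dual): the initial topology of all continuous
   linear functionals, i.e. of the evaluation map into the product. *)
Definition weak_topology : Type := initial_topology weak_eval.

Definition weakly_compact (K : set X) : Prop := @compact weak_topology K.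

Definition radius (x : X) (A : set X) : \bar R :=
  ereal_sup [set (`|x - y|)%:E | y in A].

Definition diminishes_radius (K : set X) (T : X -> X) : Prop :=
  forall A : set X, A `<=` K -> convex_subset A -> T @` A `<=` A ->
    forall x, K x -> (radius (T x) (T @` A) <= radius x A)%E.

End Defs.

Definition uniformly_convex {R : realType} (X : normedModType R) : Prop :=
  forall eps : R, 0 < eps -> eps <= 2 ->
    exists2 delta : R, 0 < delta &
      forall x y : X, `|x| <= 1 -> `|y| <= 1 -> eps <= `|x - y| ->
        `|(2 : R)^-1 *: (x + y)| <= 1 - delta.

(* Main.v *)
Require Import Defs.
From HB Require Import structures.
From mathcomp Require Import all_boot all_order all_algebra.
From mathcomp Require Import all_classical all_reals all_analysis.
From mathcomp Require Import ring lra.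
From mathcomp Require Import finmap.
Import Order.TTheory GRing.Theory Num.Theory.
Import numFieldNormedType.Exports.
Local Open Scope classical_set_scope.
Local Open Scope ring_scope.
Set Implicit Arguments. Unset Strict Implicit. Unset Printing Implicit Defensive.

Section HBsec.
Context {R : realType} {X : normedModType R}.

Definition subsp (D : set X) := D 0 /\ forall (a : R) x y, D x -> D y -> D (a *: x + y).

Record part := Part { pD : set X; pg : X -> R;
  pS : subsp pD;
  pL : forall (a : R) x y, pD x -> pD y -> pg (a *: x + y) = a * pg x + pg y;
  pB : forall x, pD x -> pg x <= `|x| }.

Definition ext (p q : part) :=
  pD p `<=` pD q /\ forall x, pD p x -> pg q x = pg p x.

Lemma subspZ D a x : subsp D -> D x -> D (a *: x).
Proof. by move=> [D0 DS] Dx; rewrite -[_ *: _]addr0; apply: DS. Qed.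

Lemma subspD D x y : subsp D -> D x -> D y -> D (x + y).
Proof. by move=> [D0 DS] Dx Dy; rewrite -[x]scale1r; apply: DS. Qed.

Lemma subspB D x y : subsp D -> D x -> D y -> D (x - y).
Proof.
move=> [D0 DS] Dx Dy; rewrite addrC -scaleN1r; exact: DS.
Qed.

Lemma pg0 (p : part) : pg p 0 = 0.
Proof.
have := @pL p 1 0 0 (proj1 (pS p)) (proj1 (pS p)).
rewrite scale1r addr0 mul1r => h; lra.
Qed.

Lemma pgZ (p : part) a x : pD p x -> pg p (a *: x) = a * pg p x.
Proof.
move=> Dx; have := @pL p a x 0 Dx (proj1 (pS p)).
by rewrite addr0 pg0 addr0.
Qed.

Lemma pgD (p : part) x y : pD p x -> pD p y -> pg p (x + y) = pg p x + pg p y.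
Proof.
move=> Dx Dy; have := @pL p 1 x y Dx Dy.
by rewrite scale1r mul1r.
Qed.

Lemma pgN (p : part) x : pD p x -> pg p (- x) = - pg p x.
Proof. by move=> Dx; rewrite -scaleN1r pgZ // mulN1r. Qed.

Lemma ext_c (p : part) w : exists c : R, forall x t, pD p x ->
  pg p x + t * c <= `|x + t *: w|.
Proof.
pose L := [set pg p y - `|y - w| | y in pD p].
have key y y' : pD p y -> pD p y' -> pg p y - `|y - w| <= `|y' + w| - pg p y'.
  move=> Dy Dy'.
  have h1 := pB (subspD (pS p) Dy Dy').
  rewrite pgD // in h1.
  have h2 : `|y + y'| <= `|y - w| + `|y' + w|.
    have -> : y + y' = (y - w) + (y' + w) by rewrite addrACA addNr addr0.
    exact: ler_normD.
  lra.
have D0 := proj1 (pS p).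
have hL : has_sup L.
  split; first by exists (pg p 0 - `|0 - w|); exists 0.
  by exists (`|0 + w| - pg p 0) => _ [y Dy <-]; apply: key.
exists (sup L) => x t Dx.
have supU y : pD p y -> pg p y - `|y - w| <= sup L.
  by move=> Dy; apply: sup_upper_bound => //; exists y.
have supL y : pD p y -> sup L <= `|y + w| - pg p y.
  move=> Dy; apply: ge_sup; first by case: hL.
  by move=> _ [y' Dy' <-]; apply: key.
have [tlt0|tgt0|->] := ltgtP t 0.
- pose s := - t; have s0 : 0 < s by rewrite /s oppr_gt0.
  have := supU (s^-1 *: x) (subspZ _ (pS p) Dx).
  rewrite pgZ //.
  have -> : s^-1 *: x - w = s^-1 *: (x + t *: w).
    by rewrite scalerDr scalerA /s invrN mulNr mulVf ?lt_eqF // scaleN1r.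
  rewrite normrZ gtr0_norm ?invr_gt0 //.
  have hs : s * s^-1 = 1 by rewrite mulfV // gt_eqF.
  rewrite /s in hs s0 * => h.
  have h' : (- t) * ((- t)^-1 * pg p x - (- t)^-1 * `|x + t *: w|) <= (-t) * sup L.
    by rewrite ler_pM2l.
  move: h'; rewrite mulrBr !mulrA hs !mul1r; lra.
- have := supL (t^-1 *: x) (subspZ _ (pS p) Dx).
  rewrite pgZ //.
  have -> : t^-1 *: x + w = t^-1 *: (x + t *: w).
    by rewrite scalerDr scalerA mulVf ?gt_eqF // scale1r.
  rewrite normrZ gtr0_norm ?invr_gt0 //.
  have hs : t * t^-1 = 1 by rewrite mulfV // gt_eqF.
  move=> h.
  have h' : t * sup L <= t * (t^-1 * `|x + t *: w| - t^-1 * pg p x).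
    by rewrite ler_pM2l.
  move: h'; rewrite mulrBr !mulrA hs !mul1r; lra.
- by rewrite mul0r addr0 scale0r addr0; apply: pB.
Qed.


Lemma ext_step (p : part) w c : ~ pD p w ->
  (forall x t, pD p x -> pg p x + t * c <= `|x + t *: w|) ->
  exists q : part, ext p q /\ pD q w /\ pg q w = c.
Proof.
move=> nw hc.
pose D' v := exists x t, pD p x /\ v = x + t *: w.
have uniq x t x' t' : pD p x -> pD p x' -> x + t *: w = x' + t' *: w ->
    x = x' /\ t = t'.
  move=> Dx Dx' e; have [tt'|ntt'] := eqVneq t t'.
    by subst t'; split => //; exact: (addIr _ e).
  exfalso; apply: nw.
  have e2 : x' - x = (t - t') *: w.
    have -> : x' - x = (x' + t' *: w) - (x + t' *: w).
      by rewrite opprD addrACA subrr addr0.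
    by rewrite -e opprD addrACA subrr add0r scalerBl.
  have -> : w = (t - t')^-1 *: (x' - x).
    by rewrite e2 scalerA mulVf ?subr_eq0 // scale1r.
  apply: subspZ (pS p) _; exact: subspB (pS p) Dx' Dx.
pose g' v := match pselect (D' v) with
  | left h => let: exist x hx := cid h in let: exist t _ := cid hx in
              pg p x + t * c
  | right _ => 0 end.
have g'E x t : pD p x -> g' (x + t *: w) = pg p x + t * c.
  move=> Dx; rewrite /g'; case: pselect => [h|[]]; last by exists x, t.
  case: (cid h) => x1 hx1; case: (cid hx1) => t1 [Dx1 e].
  by have [<- <-] := uniq _ _ _ _ Dx Dx1 e.
have comb a x t x' t' : a *: (x + t *: w) + (x' + t' *: w) =
    (a *: x + x') + (a * t + t') *: w.
  by rewrite scalerDr addrACA scalerA -scalerDl.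
have S' : subsp D'.
  split; first by exists 0, 0; split; [exact: (proj1 (pS p))|rewrite scale0r addr0].
  move=> a _ _ [x [t [Dx ->]]] [x' [t' [Dx' ->]]].
  exists (a *: x + x'), (a * t + t'); split; last exact: comb.
  by apply: (proj2 (pS p)).
have L' : forall (a : R) x y, D' x -> D' y -> g' (a *: x + y) = a * g' x + g' y.
  move=> a _ _ [x [t [Dx ->]]] [x' [t' [Dx' ->]]].
  rewrite comb !g'E //; last by apply: (proj2 (pS p)).
  rewrite (@pL p a x x' Dx Dx'); ring.
have B' : forall x, D' x -> g' x <= `|x|.
  by move=> _ [x [t [Dx ->]]]; rewrite g'E //; apply: hc.
exists (@Part D' g' S' L' B'); split; [split|split] => /=.
- by move=> x Dx; exists x, 0; rewrite scale0r addr0.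
- by move=> x Dx; have := g'E x 0 Dx; rewrite scale0r !addr0 mul0r addr0.
- by exists 0, 1; split; [exact: (proj1 (pS p))|rewrite scale1r add0r].
- by have := g'E 0 1 (proj1 (pS p)); rewrite scale1r add0r pg0 add0r mul1r.
Qed.


Lemma chain_ub (A : set part) : A !=set0 ->
  (forall s t, A s -> A t -> ext s t \/ ext t s) ->
  exists u : part, forall s, A s -> ext s u.
Proof.
move=> [s0 As0] tot.
pose UD x := exists s, A s /\ pD s x.
pose Ug x := match pselect (exists s, A s /\ pD s x) with
  | left h => pg (projT1 (cid h)) x | right _ => 0 end.
have UgE s x : A s -> pD s x -> Ug x = pg s x.
  move=> As Dx; rewrite /Ug; case: pselect => [h|[]]; last by exists s.
  case: (cid h) => s' [As' Ds'x] /=.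
  have [[_ e]|[_ e]] := tot _ _ As' As; first by rewrite e.
  by rewrite e.
have both2 x y : UD x -> UD y -> exists s, [/\ A s, pD s x & pD s y].
  move=> [s1 [A1 D1]] [s2 [A2 D2]].
  have [[sub _]|[sub _]] := tot _ _ A1 A2.
    by exists s2; split => //; apply: sub.
  by exists s1; split => //; apply: sub.
have S' : subsp UD.
  split; first by exists s0; split => //; exact: (proj1 (pS s0)).
  move=> a x y Ux Uy; have [s [As Dx Dy]] := both2 _ _ Ux Uy.
  by exists s; split => //; apply: (proj2 (pS s)).
have L' : forall (a : R) x y, UD x -> UD y -> Ug (a *: x + y) = a * Ug x + Ug y.
  move=> a x y Ux Uy; have [s [As Dx Dy]] := both2 _ _ Ux Uy.
  rewrite !(UgE s) //; first exact: pL.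
  by apply: (proj2 (pS s)).
have B' : forall x, UD x -> Ug x <= `|x|.
  by move=> x [s [As Dx]]; rewrite (UgE s) //; apply: pB.
exists (@Part UD Ug S' L' B') => s As; split => /=.
  by move=> x Dx; exists s.
by move=> x Dx; apply: UgE.
Qed.

Lemma norming (z : X) : exists f : X -> R,
  (forall (a : R) x y, f (a *: x + y) = a * f x + f y) /\
  (forall x, `|f x| <= `|x|) /\ f z = `|z|.
Proof.
have [->|z0] := eqVneq z 0.
  exists (fun _ => 0); split; first by move=> *; rewrite mulr0 addr0.
  by split; [move=> x; rewrite normr0|rewrite normr0].
pose D0 : set X := [set 0].
have S0 : subsp D0.
  by split => // a x y -> ->; rewrite scaler0 addr0.
have L0 : forall (a : R) x y, D0 x -> D0 y ->
    (fun _ : X => (0:R)) (a *: x + y) = a * 0 + 0.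
  by move=> *; rewrite mulr0 addr0.
have B0 : forall x, D0 x -> (fun _ : X => (0:R)) x <= `|x| by [].
pose p0 := @Part D0 (fun _ => 0) S0 L0 B0.
have [q0 [_ [Dq0 gq0]]] : exists q : part, ext p0 q /\ pD q z /\ pg q z = `|z|.
  apply: ext_step => /=.
    by move=> e; move: z0; rewrite e eqxx.
  move=> x t -> /=; rewrite !add0r normrZ.
  by apply: ler_wpM2r => //; exact: ler_norm.
pose T := {q : part | pD q z /\ pg q z = `|z|}.
pose Rl (s t : T) := `[< ext (sval s) (sval t) >].
have t0 : T := exist _ q0 (conj Dq0 gq0).
have [t tmax] : exists t, premaximal Rl t.
  apply: (@ZL_preorder T t0 Rl).
- by move=> s; apply/asboolP; split.
- move=> r s t /asboolP [s1 e1] /asboolP [s2 e2]; apply/asboolP; split.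
    exact: subset_trans s2.
  by move=> x Dx; rewrite e2 ?e1 //; apply: s1.
- move=> A tot.
  have [[a Aa]|A0] := pselect (A !=set0); last first.
    by exists t0 => s As; exfalso; apply: A0; exists s.
  have [||u ub] := @chain_ub (sval @` A).
  - by exists (sval a); exists a.
  - move=> _ _ [s As <-] [s' As' <-].
    by have [/asboolP|/asboolP] := tot _ _ As As'; [left|right].
  have [Da ga] := svalP a.
  have [sub e] := ub (sval a) (ex_intro2 _ _ a Aa erefl).
  have hu : pD u z /\ pg u z = `|z| by split; [apply: sub|rewrite e].
  exists (exist _ u hu) => s As; apply/asboolP.
  exact: ub (ex_intro2 _ _ s As erefl).
have Dall w : pD (sval t) w.
  have [//|nw] := pselect (pD (sval t) w).
  have [c hc] := ext_c (sval t) w.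
  have [q [[sub e] [Dw _]]] := ext_step nw hc.
  have [Dz gz] := svalP t.
  have hq : pD q z /\ pg q z = `|z| by split; [apply: sub|rewrite e].
  have /asboolP [sub2 _] := tmax (exist _ q hq) (asboolT (conj sub e)).
  exact: sub2.
exists (pg (sval t)); split; first by move=> a x y; apply: pL.
split; last by have [] := svalP t.
move=> x; rewrite ler_norml; apply/andP; split; last exact: pB.
by rewrite lerNl -pgN //; rewrite -(normrN x); apply: pB.
Qed.


Lemma lin_cont (f : X -> R) :
  (forall (a : R) x y, f (a *: x + y) = a * f x + f y) ->
  (forall x, `|f x| <= `|x|) -> continuous f.
Proof.
move=> hl hb x.
have f0 : f 0 = 0.
  by have := hl 1 0 0; rewrite scale1r addr0 mul1r => h; lra.
have fB u v : f (u - v) = f u - f v.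
  have := hl (-1) v u; rewrite scaleN1r mulN1r addrC => ->; by rewrite addrC.
apply/(@cvgrPdist_lt _ _ _ (nbhs x)) => e e0; near=> y.
rewrite -fB; apply: le_lt_trans (hb _) _.
by near: y; apply: cvgr_dist_lt.
Unshelve. all: by end_near.
Qed.

Lemma norming_dual (z : X) : exists f : @dual_space R X,
  (forall x, `|sval f x| <= `|x|) /\ sval f z = `|z|.
Proof.
have [f [hl [hb hz]]] := norming z.
by exists (exist _ f (conj hl (lin_cont hl hb))).
Qed.

End HBsec.

Section Wk.
Context {R : realType} {X : normedModType R}.
Local Notation WT := (@weak_topology R X).
Local Notation DS := (@dual_space R X).

Definition wclosed (A : set X) := @closed WT A.

Lemma dB (f : DS) u v : sval f (u - v) = sval f u - sval f v.
Proof.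
have [hl _] := svalP f.
have f0 : sval f 0 = 0.
  by have := hl 1 0 0; rewrite scale1r addr0 mul1r => h; lra.
have := hl (-1) v u; rewrite scaleN1r mulN1r addrC => ->; by rewrite addrC.
Qed.

Lemma proj_cont (I : Type) (T : topologicalType) (i : I) :
  continuous (fun g : prod_topology (fun _ : I => T) => g i).
Proof.
move=> f; have /cvg_sup/(_ i)/cvg_image : f --> f by apply: cvg_id.
move=> h; apply: cvg_trans (h _) => {h}.
  by move=> Q /= [W nbdW <-]; apply: filterS nbdW; exact: preimage_image.
rewrite eqEsubset; split => y //; exists (fun _ => y) => //.
Qed.

Lemma wcont (f : DS) : continuous (fun x : WT => sval f x).
Proof.
move=> x.
have h1 : {for x, continuous (@weak_eval R X : WT -> _)}.
  exact: initial_continuous.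
have h2 := @proj_cont DS R f (@weak_eval R X x).
exact: (@continuous_comp WT _ R _ (fun g : prod_topology (fun _ : DS => R) => g f) x h1 h2).
Qed.

Lemma wclosed_half (f : DS) c : wclosed [set x | sval f x <= c].
Proof.
rewrite /wclosed.
apply: (@preimage_closed WT R (fun x : WT => sval f x) [set y | y <= c]).
  by move=> x _; apply: wcont.
exact: closed_le.
Qed.

Definition cb (c : X) (rho : R) := [set z : X | `|c - z| <= rho].

Lemma wclosed_cb c rho : wclosed (cb c rho).
Proof.
have -> : cb c rho = \bigcap_(f in [set f : DS | forall x, `|sval f x| <= `|x|])
    [set z | sval f z <= sval f c + rho].
  apply/seteqP; split => z /=.
    move=> hz f hf /=; have h1 := dB f z c.
    have h2 : sval f (z - c) <= `|z - c| := le_trans (ler_norm _) (hf _).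
    have hz' : `|z - c| <= rho by rewrite distrC.
    lra.
  move=> h; have [f [hf hfz]] := norming_dual (z - c).
  have := h f hf; have := dB f z c; rewrite hfz /cb /= distrC => h1 h2; lra.
apply: closed_bigI => f _; exact: wclosed_half.
Qed.

Lemma convex_cb c rho : convex_subset (cb c rho).
Proof.
move=> x y t; rewrite /cb /= => hx hy t0 t1.
have -> : c - (t *: x + (1 - t) *: y) = t *: (c - x) + (1 - t) *: (c - y).
  by rewrite !scalerBr addrACA -scalerDl subrKC scale1r opprD.
apply: le_trans (ler_normD _ _) _.
rewrite !normrZ !ger0_norm ?subr_ge0 //.
have -> : rho = t * rho + (1 - t) * rho by ring.
by apply: lerD; apply: ler_wpM2l => //; rewrite subr_ge0.
Qed.

Lemma seq_chain_min (I : eqType) (F : I -> set X) (P : I -> Prop) (s : seq I) :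
  (forall i j, P i -> P j -> F i `<=` F j \/ F j `<=` F i) ->
  (forall i, i \in s -> P i) -> s != [::] ->
  exists2 i, i \in s & forall j, j \in s -> F i `<=` F j.
Proof.
move=> tot; elim: s => [//|a s IH] hP _.
have Pa : P a by apply: hP; rewrite inE eqxx.
have [->|sn] := eqVneq s [::].
  by exists a; rewrite ?inE ?eqxx // => j; rewrite inE => /eqP ->.
have [|i is_ hi] := IH _ sn.
  by move=> i ii; apply: hP; rewrite inE ii orbT.
have Pi : P i by apply: hP; rewrite inE is_ orbT.
have [ai|ia] := tot _ _ Pa Pi.
  exists a; first by rewrite inE eqxx.
  move=> j; rewrite inE => /orP[/eqP ->//|js].
  exact: subset_trans ai (hi _ js).
exists i; first by rewrite inE is_ orbT.
by move=> j; rewrite inE => /orP[/eqP ->//|js]; apply: hi.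
Qed.

Lemma wcompact_chain (K : set X) (I : choiceType) (D : set I) (F : I -> set X) :
  weakly_compact K -> (exists i, D i) -> (forall i, D i -> wclosed (F i)) ->
  (forall i, D i -> (K `&` F i) !=set0) ->
  (forall i j, D i -> D j -> F i `<=` F j \/ F j `<=` F i) ->
  exists x, K x /\ forall i, D i -> F i x.
Proof.
move=> hK [i0 Di0] hcl hne tot.
move: hK; rewrite /weakly_compact compact_In0 => /(_ I D (fun i => K `&` F i)).
case.
- by exists F.
- move=> D' sD'.
  have [->|Dn] := eqVneq D' fset0.
    by exists 0 => i /=; rewrite inE.
  have [||i iD' hi] := @seq_chain_min I F D (enum_fset D') tot.
  - by move=> i ii; apply/set_mem/sD'.
  - case/fset0Pn: Dn => x xD; apply/eqP => e; move: xD.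
    by rewrite -[x \in D']/(x \in enum_fset D') e.
  have [x [Kx Fx]] := hne i (set_mem (sD' _ iD')).
  exists x => j /= jD'; split => //; exact: hi.
- move=> x hx; exists x; split.
    by case: (hx i0 Di0).
  by move=> i Di; case: (hx i Di).
Qed.

End Wk.

Section Sokal.
Context {R : realType} {X : normedModType R}.
Local Notation q := ((3 : R)^-1).

Fixpoint gs (xs : nat -> X) (ph : nat -> X -> R) (m : nat) (y : X) : R :=
  match m with 0 => 0 | m'.+1 => gs xs ph m' y +
     (if 0 <= gs xs ph m' (xs m') then 1 else -1) * q ^+ m' * ph m' y end.

Variables (xs : nat -> X) (ph : nat -> X -> R).
Hypothesis phL : forall n (a : R) x y, ph n (a *: x + y) = a * ph n x + ph n y.
Hypothesis phB : forall n y, `|ph n y| <= `|y|.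
Hypothesis phx : forall n, ph n (xs n) = `|xs n|.

Lemma gsL m a x y : gs xs ph m (a *: x + y) = a * gs xs ph m x + gs xs ph m y.
Proof.
elim: m => [|m IH] /=; first by rewrite mulr0 addr0.
rewrite IH phL; ring.
Qed.

Lemma q_ge0 n : 0 <= q ^+ n.
Proof. by apply: exprn_ge0; rewrite invr_ge0. Qed.

Lemma gs_tail n k y :
  `|gs xs ph (n + k) y - gs xs ph n y| <= 3/2 * (q ^+ n - q ^+ (n + k)) * `|y|.
Proof.
elim: k => [|k IH]; first by rewrite addn0 !subrr normr0 mulr0 mul0r.
rewrite addnS /=.
set e := (if _ then _ else _).
have he : `|e| = 1 by rewrite /e; case: ifP => _; rewrite ?normrN normr1.
set A := gs xs ph (n + k) y; set B := gs xs ph n y.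
have h1 : `|A + e * q ^+ (n + k) * ph (n + k) y - B| <=
    `|A - B| + `|e * q ^+ (n + k) * ph (n + k) y|.
  by rewrite addrAC; apply: ler_normD.
have h2 : `|e * q ^+ (n + k) * ph (n + k) y| <= q ^+ (n + k) * `|y|.
  rewrite !normrM he mul1r ger0_norm ?q_ge0 //.
  by apply: ler_wpM2l; [exact: q_ge0|exact: phB].
apply: le_trans h1 _; apply: le_trans (lerD IH h2) _.
rewrite exprS.
have -> : 3 / 2 * (q ^+ n - q ^+ (n + k)) * `|y| + q ^+ (n + k) * `|y| =
    3 / 2 * (q ^+ n - q * q ^+ (n + k)) * `|y| by field.
done.
Qed.

Lemma gs_tail' n m y : (n <= m)%N ->
  `|gs xs ph m y - gs xs ph n y| <= 3/2 * q ^+ n * `|y|.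
Proof.
move=> nm; rewrite -(subnKC nm); apply: le_trans (gs_tail _ _ _) _.
apply: ler_wpM2r => //; apply: ler_wpM2l => //.
by rewrite lerBlDr lerDl q_ge0.
Qed.

Lemma gs_cvg y : cvg ((fun m => gs xs ph m y) @ \oo).
Proof.
apply/cauchy_cvgP; apply: cauchy_exP => e e0.
have qlt1 : `|q| < 1.
  by rewrite ger0_norm ?invr_ge0 // invf_lt1 // ltr1n.
have /cvgr0Pnorm_lt/(_ e e0) [N _ hN] := cvg_geometric (3/2 * (`|y| + 1)) qlt1.
exists (gs xs ph N y); exists N => // m /= Nm.
rewrite -ball_normE /ball_ /=.
apply: le_lt_trans; first by rewrite distrC; exact: gs_tail'.
apply: le_lt_trans (hN N (leqnn N)); rewrite /geometric /=.
rewrite ger0_norm; last by apply: mulr_ge0 => //; exact: q_ge0.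
have := q_ge0 N; have := normr_ge0 y; nra.
Qed.

Definition flim y := lim ((fun m => gs xs ph m y) @ \oo).

Lemma flimL a x y : flim (a *: x + y) = a * flim x + flim y.
Proof.
rewrite /flim (_ : (fun m => _) = (fun m => a * gs xs ph m x + gs xs ph m y)).
  apply: cvg_lim => //; apply: cvgD; last exact: gs_cvg.
  apply: cvgMl_tmp; exact: gs_cvg.
by apply/funext => m; rewrite gsL.
Qed.

Lemma flim_tail n y : `|flim y - gs xs ph n y| <= 3/2 * q ^+ n * `|y|.
Proof.
have c1 : cvg ((fun m => `|gs xs ph m y - gs xs ph n y|) @ \oo).
  apply/cvg_ex; exists `|flim y - gs xs ph n y|.
  apply: cvg_norm; apply: cvgB; [exact: gs_cvg|exact: cvg_cst].
have -> : `|flim y - gs xs ph n y| = lim ((fun m => `|gs xs ph m y - gs xs ph n y|) @ \oo).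
  apply/esym/cvg_lim => //; apply: cvg_norm; apply: cvgB; [exact: gs_cvg|exact: cvg_cst].
apply: limr_le => //; exists n => // m /= nm; exact: gs_tail'.
Qed.

Lemma flim_bound y : `|flim y| <= 3/2 * `|y|.
Proof. by have := flim_tail 0 y; rewrite /= subr0 expr0 mulr1. Qed.

Lemma flim_big n : q ^+ n * `|xs n| / 2 <= `|flim (xs n)|.
Proof.
have h := flim_tail n.+1 (xs n).
set G := gs xs ph n (xs n).
have hq := q_ge0 n.
have hx := normr_ge0 (xs n).
have hs : q ^+ n * `|xs n| <= `|gs xs ph n.+1 (xs n)|.
  rewrite /= phx -/G; case: (leP 0 G) => h0.
    have hP : 0 <= q ^+ n * `|xs n| by apply: mulr_ge0.
    rewrite mul1r; have := ler_norm (G + q ^+ n * `|xs n|); lra.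
  have hP : 0 <= q ^+ n * `|xs n| by apply: mulr_ge0.
  rewrite mulN1r mulNr; have := ler_norm (- (G - q ^+ n * `|xs n|)); rewrite normrN; lra.
have h3 : `|gs xs ph n.+1 (xs n)| <= `|flim (xs n)| + `|flim (xs n) - gs xs ph n.+1 (xs n)|.
  set g := gs xs ph n.+1 (xs n); set f := flim (xs n).
  have e : f - (f - g) = g by rewrite opprB addrC subrK.
  by rewrite -{1}e ler_normB.
rewrite exprS in h.
have : 3 / 2 * (q * q ^+ n) * `|xs n| = q ^+ n * `|xs n| / 2 by field.
lra.
Qed.

End Sokal.

Section Bnd.
Context {R : realType} {X : normedModType R}.
Local Notation WT := (@weak_topology R X).
Local Notation DS := (@dual_space R X).

Lemma wfun_bounded (K : set X) (f : DS) : weakly_compact K ->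
  exists M : R, forall x, K x -> `|sval f x| <= M.
Proof.
move=> hK.
have cK : compact ((fun x : WT => sval f x) @` K).
  apply: (@continuous_compact WT R (fun x : WT => sval f x) K) => //.
  by apply: continuous_subspaceT; apply: wcont.
case: (compact_bounded cK) => M0 [_ hM].
exists (M0 + 1) => x Kx.
by apply: (hM (M0 + 1)); [rewrite ltrDl|exists x].
Qed.

Lemma wcompact_bounded (K : set X) : weakly_compact K ->
  exists B : R, forall x, K x -> `|x| <= B.
Proof.
move=> hK; apply: contrapT => nb.
have unb B : exists x, K x /\ B < `|x|.
  apply: contrapT => h; apply: nb; exists B => x Kx; rewrite leNgt; apply/negP => lt.
  by apply: h; exists x.
pose q : R := 3^-1.
pose xs n := projT1 (cid (unb (2 * n%:R / q ^+ n))).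
have xsP n : K (xs n) /\ 2 * n%:R / q ^+ n < `|xs n|.
  by rewrite /xs; case: cid.
pose nf (z : X) : DS := projT1 (cid (norming_dual z)).
have nfP (z : X) : (forall x, `|sval (nf z) x| <= `|x|) /\ sval (nf z) z = `|z|.
  by rewrite /nf; case: cid.
pose ph n := sval (nf (xs n)).
have phL n (a : R) x y : ph n (a *: x + y) = a * ph n x + ph n y.
  by rewrite /ph; case: (svalP (nf (xs n))) => hl _; apply: hl.
have phB n y : `|ph n y| <= `|y| by apply: (proj1 (nfP _)).
have phx n : ph n (xs n) = `|xs n| by apply: (proj2 (nfP _)).
pose h y := (2/3) * flim xs ph y.
have hL (a : R) x y : h (a *: x + y) = a * h x + h y.
  by rewrite /h (flimL xs phL phB); ring.
have hB y : `|h y| <= `|y|.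
  rewrite /h normrM ger0_norm //.
  have := flim_bound xs phB y; have := normr_ge0 (flim xs ph y); lra.
pose d : DS := exist _ h (conj hL (lin_cont hL hB)).
have [M hM] := wfun_bounded d hK.
pose n := (Num.truncn (2 * `|M|)).+1.
have hn : 2 * `|M| < n%:R by apply: truncnS_gt.
have [Kx hx] := xsP n.
have := hM _ Kx; rewrite /= /h normrM ger0_norm //.
have := flim_big phB phx n.
have qn : 0 < q ^+ n by apply: exprn_gt0; rewrite invr_gt0.
have : 2 * n%:R < q ^+ n * `|xs n|.
  by move: hx; rewrite ltr_pdivrMr // [_ * q ^+ n]mulrC.
have := ler_norm M.
move=> h1 h2 h3 h4.
set F := `|flim xs ph (xs n)| in h3 h4.
have [P eP] : exists P, P = q ^+ n * `|xs n| by exists (q ^+ n * `|xs n|).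
have h2' : 2 * n%:R < P by rewrite eP.
have h3' : P / 2 <= F by rewrite eP.
clear h2 h3 eP.
clearbody F n.
have e1 : n%:R < F.
  by move: h2' h3'; clear; move=> a b; lra.
have := normr_ge0 M; lra.
Qed.

End Bnd.

Section Main.
Context {R : realType} {X : normedModType R}.
Local Notation WT := (@weak_topology R X).
Variables (K : set X) (T : X -> X).
Hypotheses (hne : K !=set0) (hK : weakly_compact K) (cK : convex_subset K)
  (TK : forall x, K x -> K (T x)).

Definition wcl (A : set X) : set X := @closure WT A.

Lemma wclosed_wcl A : wclosed (wcl A).
Proof. exact: closed_closure. Qed.

Lemma wcl_sub A : A `<=` wcl A.
Proof. exact: (@subset_closure WT). Qed.

Lemma wcl_min A G : wclosed G -> A `<=` G -> wcl A `<=` G.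
Proof.
move=> cG AG; apply: subset_trans cG; exact: (@closureS WT _ _ AG).
Qed.

Lemma wclS A B : A `<=` B -> wcl A `<=` wcl B.
Proof. exact: (@closureS WT). Qed.

Definition good (M : set X) :=
  [/\ M `<=` K, M !=set0, convex_subset M, (forall x, M x -> M (T x))
    & M = K `&` wcl M].

Lemma relclosed (M G : set X) : wclosed G -> M = K `&` G -> M = K `&` wcl M.
Proof.
move=> cG eM; apply/seteqP; split => x.
  move=> Mx; split; last exact: wcl_sub.
  by move: Mx; rewrite eM => -[].
move=> [Kx wx]; rewrite eM; split => //.
apply: (wcl_min cG) wx; rewrite eM; exact: subIsetr.
Qed.

Lemma exists_minimal : exists M, good M /\
  forall N, good N -> N `<=` M -> M `<=` N.
Proof.
pose TT := {M : set X | good M}.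
pose Rl (s t : TT) := `[< sval t `<=` sval s >].
have gK : good K.
  split => //; apply: (@relclosed K setT); first exact: closedT.
  by rewrite setIT.
have [t tmax] : exists t, premaximal Rl t.
  apply: (@ZL_preorder TT (exist _ K gK) Rl).
  - by move=> s; apply/asboolP.
  - move=> r s t /asboolP h1 /asboolP h2; apply/asboolP; exact: subset_trans h1.
  move=> A tot.
  have [[a Aa]|A0] := pselect (A !=set0); last first.
    by exists (exist _ K gK) => s As; exfalso; apply: A0; exists s.
  pose Mi := [set x | K x /\ forall s, A s -> sval s x].
  have Dn : exists i, (sval @` A) i by exists (sval a); exists a.
  have gMi : good Mi.
    split.
    - by move=> x [].
    - have [||| x [Kx hx]] := @wcompact_chain _ _ K (set X) (sval @` A) wcl hK Dn.
      + by move=> i _; exact: wclosed_wcl.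
      + move=> _ [s As <-]; have [_ [y sy] _ _ _] := svalP s.
        by exists y; split; [case: (svalP s) => + _ _ _ _; apply|exact: wcl_sub].
      + move=> _ _ [s As <-] [s' As' <-].
        by have [/asboolP h|/asboolP h] := tot _ _ As As'; [right|left]; apply: wclS.
      exists x; split => // s As.
      have [_ _ _ _ ->] := svalP s; split => //; apply: hx; by exists s.
    - move=> x y u [Kx hx] [Ky hy] u0 u1; split; first exact: cK.
      by move=> s As; have [_ _ cs _ _] := svalP s; apply: cs => //; [apply: hx|apply: hy].
    - move=> x [Kx hx]; split; first exact: TK.
      by move=> s As; have [_ _ _ ts _] := svalP s; apply: ts; apply: hx.
    - apply: (@relclosed Mi (\bigcap_(i in sval @` A) wcl i)).
        by apply: closed_bigI => i _; exact: wclosed_wcl.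
      apply/seteqP; split => x.
        move=> [Kx hx]; split => // _ [s As <-]; exact/wcl_sub/hx.
      move=> [Kx hx]; split => // s As.
      have [_ _ _ _ ->] := svalP s; split => //; apply: hx; by exists s.
  exists (exist _ Mi gMi) => s As; apply/asboolP => x [_ hx]; exact: hx.
exists (sval t); split; first exact: svalP.
move=> N gN sub.
by have /asboolP := tmax (exist _ N gN) (asboolT sub).
Qed.


Hypotheses (UC : uniformly_convex X) (dim : diminishes_radius K T).
Variable M : set X.
Hypotheses (gM : good M) (minM : forall N, good N -> N `<=` M -> M `<=` N).

Lemma Mmin W : wclosed W -> convex_subset W -> (forall y, M y -> W (T y)) ->
  M `<=` W.
Proof.
move=> cW vW tW.
pose WW := [set W : set X | wclosed W /\ convex_subset W /\ (forall y, M y -> W (T y))].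
pose N := [set x | M x /\ forall W, WW W -> W x].
have gN : good N.
  case: gM => MK [m Mm] cM tM eM.
  split.
  - by move=> x [/MK].
  - exists (T m); split; [exact: tM|by move=> W' [_ [_ h]]; apply: h].
  - move=> x y u [Mx hx] [My hy] u0 u1; split; first exact: cM.
    move=> W' hW'; have [_ [vW' _]] := hW'.
    by apply: vW'; [exact: hx|exact: hy|exact: u0|exact: u1].
  - move=> x [Mx hx]; split; first exact: tM.
    by move=> W' [_ [_ h]]; apply: h.
  - apply: (@relclosed N (wcl M `&` \bigcap_(W' in WW) W')).
      apply: (@closedI WT); first exact: wclosed_wcl.
      by apply: closed_bigI => W' [].
    apply/seteqP; split => x.
      move=> [Mx hx]; split; first exact: MK.
      by split; [exact: wcl_sub|move=> W' hW'; apply: hx].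
    move=> [Kx [wx hx]]; split; last by move=> W' hW'; apply: hx.
    by rewrite eM.
have sub : N `<=` M by move=> x [].
move=> x /(minM gN sub) [_ hx]; apply: hx; split => //; split => //.
Qed.

Definition Dset s := [set x | M x /\ forall y, M y -> `|x - y| <= s].
Definition Sset := [set s | Dset s !=set0].

Lemma Dset_mono s s' : s <= s' -> Dset s `<=` Dset s'.
Proof. by move=> ss x [Mx hx]; split => // y My; apply: le_trans (hx _ My) ss. Qed.

Lemma Sset_inf : has_inf Sset.
Proof.
split.
  have [B hB] := wcompact_bounded hK.
  case: gM => MK [m Mm] _ _ _.
  exists (B + B); exists m; split => // y My.
  apply: le_trans (ler_normB _ _) _.
  by apply: lerD; apply: hB; apply: MK.
exists 0 => s [x [Mx hx]].
by apply: le_trans (hx _ Mx); rewrite subrr normr0.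
Qed.

Local Notation r := (inf Sset).

Lemma Dr_ne : Dset r !=set0.
Proof.
case: gM => MK _ _ _ eM.
pose G s := wcl M `&` \bigcap_(y in M) cb y s.
have eG s x : (K `&` G s) x <-> Dset s x.
  split.
    move=> [Kx [wx hx]]; split; first by rewrite eM.
    by move=> y My; rewrite distrC; apply: hx.
  move=> [Mx hx]; split; first exact: MK.
  split; first exact: wcl_sub.
  by move=> y My; rewrite /cb /= distrC; apply: hx.
have [|||| x [Kx hx]] := @wcompact_chain _ _ K R [set s | r < s] G hK.
- by exists (r + 1); rewrite /= ltrDl.
- move=> s _; apply: (@closedI WT); first exact: wclosed_wcl.
  by apply: closed_bigI => y _; exact: wclosed_cb.
- move=> s rs.
  have sr0 : 0 < s - r by rewrite subr_gt0.
  have [s' [z Dz] lt] := inf_adherent sr0 Sset_inf.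
  rewrite addrC subrK in lt.
  by exists z; apply/eG; exact: Dset_mono (ltW lt) _ Dz.
- move=> s s' _ _.
  case/orP: (le_total s s') => ss; [left|right]; move=> x [wx hx]; split => //;
    by move=> y My; apply: le_trans (hx _ My) ss.
have Mx : M x.
  have [wx _] := hx (r + 1) (ltr_pwDr ltr01 (lexx r)).
  by rewrite eM.
exists x; split => // y My.
apply/ler_addgt0Pr => e e0.
have [_ h] := hx (r + e) (ltr_pwDr e0 (lexx r)).
by rewrite distrC; apply: h.
Qed.


Lemma Dr_uniq x1 x2 : Dset r x1 -> Dset r x2 -> x1 = x2.
Proof.
move=> [M1 h1] [M2 h2]; apply: contrapT => ne.
have d0 : 0 < `|x1 - x2| by rewrite normr_gt0 subr_eq0; apply/eqP.
have dr : `|x1 - x2| <= r := h1 _ M2.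
have r0 : 0 < r := lt_le_trans d0 dr.
pose eps := `|x1 - x2| / r.
have e0 : 0 < eps by apply: divr_gt0.
have e2 : eps <= 2.
  rewrite /eps ler_pdivrMr //; lra.
have [del del0 hdel] := UC e0 e2.
case: gM => MK _ cM tM _.
pose m := 2^-1 *: (x1 + x2).
have Mm : M m.
  have -> : m = 2^-1 *: x1 + (1 - 2^-1) *: x2.
    rewrite /m scalerDr; congr (_ + _); congr (_ *: _).
    lra.
  by apply: cM => //; lra.
have Dm : Dset (r * (1 - del)) m.
  split => // y My.
  pose u := r^-1 *: (x1 - y); pose v := r^-1 *: (x2 - y).
  have nuv (z : X) : (forall y, M y -> `|z - y| <= r) -> `|r^-1 *: (z - y)| <= 1.
    move=> hz; rewrite normrZ ger0_norm; last by rewrite invr_ge0 ltW.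
    rewrite mulrC.
    by rewrite ler_pdivrMr // mul1r; exact: hz.
  have huv : eps <= `|u - v|.
    have -> : u - v = r^-1 *: (x1 - x2).
      by rewrite /u /v -scalerBr opprB addrA subrK.
    rewrite normrZ ger0_norm; last by rewrite invr_ge0 ltW.
    by rewrite mulrC.
  have := hdel u v (nuv _ h1) (nuv _ h2) huv.
  have -> : m - y = r *: (2^-1 *: (u + v)).
    rewrite /u /v -scalerDr !scalerA (mulrCA r) mulfV ?gt_eqF // mulr1.
    rewrite /m addrACA -opprD scalerBr; congr (_ - _).
    have h1r : (2^-1 * (1 + 1) : R) = 1 by lra.
    have -> : y + y = (1 + 1) *: y by rewrite scalerDl scale1r.
    by rewrite scalerA h1r scale1r.
  move=> h; rewrite normrZ gtr0_norm //.
  by rewrite ler_pM2l.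
have lb := ge_inf Sset_inf.2.
have : r <= r * (1 - del) by apply: lb; exists m.
nra.
Qed.

Lemma fixed : exists x, K x /\ T x = x.
Proof.
have [c [Mc hc]] := Dr_ne.
have [MK _ cM tM _] := gM.
have TMM : T @` M `<=` M by move=> _ [y My <-]; exact: tM.
have hrad := dim MK cM TMM (MK _ Mc).
have rc : (Defs.radius c M <= r%:E)%E.
  by apply: ge_ereal_sup => _ [y My <-]; rewrite lee_fin; exact: hc.
have hT z : (T @` M) z -> `|T c - z| <= r.
  move=> hz; rewrite -lee_fin; apply: le_trans (le_trans hrad rc).
  by apply: ereal_sup_ubound; exists z.
have sub : M `<=` cb (T c) r.
  apply: Mmin; [exact: wclosed_cb|exact: convex_cb|].
  by move=> y My; apply: hT; exists y.
have DTc : Dset r (T c) by split; [exact: tM|move=> y My; exact: sub].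
exists c; split; first exact: MK.
exact: Dr_uniq DTc (conj Mc hc).
Qed.

End Main.

Unset Implicit Arguments.

Theorem corollary3p1 (R : realType) (X : completeNormedModType R) :
  uniformly_convex X ->
  forall K : set X, nontrivial K -> weakly_compact K -> convex_subset K ->
  forall T : X -> X, (forall x, K x -> K (T x)) ->
    diminishes_radius K T ->
    exists x, K x /\ T x = x.
Proof.
move=> UC K [a [b [Ka _]]] hK cK T TK dim.
have hne : K !=set0 by exists a.
have [M [gM minM]] := exists_minimal hne hK cK TK.
exact: (fixed hK UC dim gM minM).
Qed.
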